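(* Let $\mathbb{F}$ be a field, let $B_1,\dots,B_d$ be $n\times n$ matrices, $P=B_1\boxtimes\cdots\boxtimes B_d$, and let $M$ be an $n^d\times n^d$ matrix. Then for every $\kappa\subseteq[d]$, \[(PM)^{\top_\kappa}=L\,M^{\top_\kappa}R,\qquad L=\mathop{\boxtimes}_{k=1}^d L_k,\ \ R=\mathop{\boxtimes}_{k=1}^d R_k,\] where $L_k=I_n$, $R_k=B_k^{\mathsf T}$ if $k\in\kappa$, and $L_k=B_k$, $R_k=I_n$ if $k\notin\kappa$. Moreover, if $B_1,\dots,B_d$ are nonsingular then $\mathrm{rank}((PM)^{\top_\kappa})=\mathrm{rank}(M^{\top_\kappa})$.
   Context: $\boxtimes$ is the Kronecker product; rows and columns of $n^d\times n^d$ matrices are indexed by $[n]^d$ consistently with the Kronecker product. For $k\in[d]$, $M^{\top_k}$ swaps the $k$-th row index with the $k$-th column index; $M^{\top_\kappa}$ composes these over $k\in\kappa$. *)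

(* Defs.v *)
From mathcomp Require Import all_boot all_algebra.
Set Implicit Arguments. Unset Strict Implicit. Unset Printing Implicit Defensive.
Import GRing.Theory.
Local Open Scope ring_scope.

Definition midx (n d : nat) := {ffun 'I_d -> 'I_n}.

(* Size n^d of the index set (equal to n ^ d by card_ffun). *)
Definition nd (n d : nat) : nat := #|{ffun 'I_d -> 'I_n}|.

Definition midx_of (n d : nat) (i : 'I_(nd n d)) : midx n d :=
  @enum_val {ffun 'I_d -> 'I_n} predT i.
Definition ord_of (n d : nat) (a : midx n d) : 'I_(nd n d) :=
  @enum_rank {ffun 'I_d -> 'I_n} a.

Definition kronmx (F : fieldType) (n d : nat) (B : 'I_d -> 'M[F]_n) : 'M[F]_(nd n d) :=
  \matrix_(i, j) \prod_(k < d) B k (midx_of i k) (midx_of j k).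

(* Partial transpose M^{T_kappa}: swaps the k-th row index with the k-th column
   index for every k in kappa. *)
Definition ptrmx (F : fieldType) (n d : nat) (kappa : {set 'I_d})
    (M : 'M[F]_(nd n d)) : 'M[F]_(nd n d) :=
  \matrix_(i, j)
    let a := midx_of i in
    let b := midx_of j in
    M (ord_of [ffun k => if k \in kappa then b k else a k])
      (ord_of [ffun k => if k \in kappa then a k else b k]).

(* Main.v *)
Require Import Defs.
From mathcomp Require Import all_boot all_algebra.
From Stdlib Require FunctionalExtensionality.
Import GRing.Theory.
Local Open Scope ring_scope.

Lemma midx_ofK n d : cancel (@ord_of n d) (@midx_of n d).
Proof. move=> a; exact: enum_rankK. Qed.
Lemma ord_ofK n d : cancel (@midx_of n d) (@ord_of n d).
Proof. move=> a; exact: enum_valK. Qed.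

Lemma sum_nd (F : fieldType) n d (G : 'I_(nd n d) -> F) :
  \sum_(c < nd n d) G c = \sum_(x : midx n d) G (ord_of x).
Proof.
rewrite (reindex (@ord_of n d)) //; exists (@midx_of n d) => x _.
  exact: midx_ofK.
exact: ord_ofK.
Qed.

Lemma prod_delta (F : fieldType) n d (e f : midx n d) :
  \prod_(k < d) ((e k == f k)%:R : F) = (e == f)%:R.
Proof.
case: eqP => [->|/eqP ne].
  by rewrite big1 // => k _; rewrite eqxx.
have [k nk] : exists k, e k != f k.
  apply/existsP; apply: contraR ne; rewrite negb_exists => /forallP H.
  by apply/eqP/ffunP => k; move: (H k); rewrite negbK => /eqP.
by rewrite (bigD1 k) //= (negbTE nk) mul0r.
Qed.

Lemma matrix_nd (F : fieldType) n d (A C : 'M[F]_(nd n d)) :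
  (forall a b, A (ord_of a) (ord_of b) = C (ord_of a) (ord_of b)) -> A = C.
Proof. move=> H; apply/matrixP => i j; have := H (midx_of i) (midx_of j); by rewrite !ord_ofK. Qed.

Lemma kronmxE (F : fieldType) n d (B : 'I_d -> 'M[F]_n) a b :
  kronmx B (ord_of a) (ord_of b) = \prod_(k < d) B k (a k) (b k).
Proof. by rewrite mxE !midx_ofK. Qed.

Lemma kron_mul (F : fieldType) n d (B C : 'I_d -> 'M[F]_n) :
  kronmx B *m kronmx C = kronmx (fun k => B k *m C k).
Proof.
apply: matrix_nd => a b.
rewrite mxE kronmxE sum_nd.
rewrite (eq_bigr (fun x : midx n d => \prod_(k < d) (B k (a k) (x k) * C k (x k) (b k)))); last first.
  by move=> x _; rewrite !kronmxE big_split.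
rewrite -(bigA_distr_bigA (fun k t => B k (a k) t * C k t (b k))).
by apply: eq_bigr => k _; rewrite mxE.
Qed.

Lemma kron1 (F : fieldType) n d : kronmx (fun _ : 'I_d => (1%:M : 'M[F]_n)) = 1%:M.
Proof.
apply: matrix_nd => a b; rewrite kronmxE [RHS]mxE.
under eq_bigr do rewrite mxE.
rewrite prod_delta; congr (_%:R).
by rewrite (inj_eq (can_inj (@midx_ofK n d))).
Qed.

Lemma kron_unit (F : fieldType) n d (B : 'I_d -> 'M[F]_n) :
  (forall k, B k \in unitmx) -> kronmx B \in unitmx.
Proof.
move=> U.
have H : kronmx B *m kronmx (fun k => invmx (B k)) = 1%:M.
  rewrite kron_mul -(kron1 F n d); congr kronmx.
  by apply: FunctionalExtensionality.functional_extensionality => k; rewrite mulmxV.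
rewrite unitmxE; apply/unitrP; exists (\det (kronmx (fun k => invmx (B k)))).
have D : \det (kronmx B) * \det (kronmx (fun k => invmx (B k))) = 1.
  by rewrite -det_mulmx H det1.
by split; rewrite // mulrC.
Qed.

Definition mix n d (kappa : {set 'I_d}) (u v : midx n d) : midx n d :=
  [ffun k => if k \in kappa then u k else v k].
Arguments mix {n d} kappa u v.

Lemma mixmix n d (kappa : {set 'I_d}) (u v : midx n d) : mix kappa (mix kappa u v) (mix kappa v u) = u.
Proof. by apply/ffunP => k; rewrite !ffunE; case: (k \in kappa). Qed.

Lemma ptrmxE (F : fieldType) n d (kappa : {set 'I_d}) (M : 'M[F]_(nd n d)) a b :
  ptrmx kappa M (ord_of a) (ord_of b) = M (ord_of (mix kappa b a)) (ord_of (mix kappa a b)).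
Proof. by rewrite mxE !midx_ofK. Qed.

Lemma LR (F : fieldType) n d (B : 'I_d -> 'M[F]_n) (kappa : {set 'I_d}) (a b c e : midx n d) :
  kronmx (fun k => if k \in kappa then 1%:M else B k) (ord_of a) (ord_of (mix kappa e c))
  * kronmx (fun k => if k \in kappa then (B k)^T else 1%:M) (ord_of (mix kappa c e)) (ord_of b)
  = (\prod_(k < d) B k (mix kappa b a k) (c k)) * (e == mix kappa a b)%:R.
Proof.
rewrite !kronmxE -prod_delta -!big_split /=; apply: eq_bigr => k _.
rewrite !ffunE; case: (k \in kappa); rewrite !mxE.
  by rewrite mulrC (eq_sym (a k)).
by [].
Qed.

Theorem lemma3p9 (F : fieldType) (n d : nat) (B : 'I_d -> 'M[F]_n)
    (M : 'M[F]_(nd n d)) (kappa : {set 'I_d}) :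
  ptrmx kappa (kronmx B *m M) =
    kronmx (fun k => if k \in kappa then 1%:M else B k) *m ptrmx kappa M
      *m kronmx (fun k => if k \in kappa then (B k)^T else 1%:M)
  /\ ((forall k, B k \in unitmx) ->
      \rank (ptrmx kappa (kronmx B *m M)) = \rank (ptrmx kappa M)).
Proof.
set L := kronmx (fun k => if k \in kappa then 1%:M else B k).
set R := kronmx (fun k => if k \in kappa then (B k)^T else 1%:M).
have E : ptrmx kappa (kronmx B *m M) = L *m ptrmx kappa M *m R.
  apply: matrix_nd => a b.
  rewrite ptrmxE mxE sum_nd.
  under eq_bigr do rewrite kronmxE.
  apply: esym; rewrite mxE sum_nd.
  have H1 : forall x, (L *m ptrmx kappa M) (ord_of a) x = \sum_(y : midx n d) L (ord_of a) (ord_of y) * ptrmx kappa M (ord_of y) x.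
    by move=> x; rewrite mxE sum_nd.
  rewrite (eq_bigr (fun x : midx n d => \sum_(y : midx n d) L (ord_of a) (ord_of y) * ptrmx kappa M (ord_of y) (ord_of x) * R (ord_of x) (ord_of b))); last by move=> x _; rewrite H1 mulr_suml.
  rewrite pair_bigA /=.
  rewrite (reindex (fun q : midx n d * midx n d => (mix kappa q.1 q.2, mix kappa q.2 q.1))) /=; last first.
    apply: onW_bij; apply: inv_bij => -[u v] /=; by rewrite !mixmix.
  under eq_bigr do rewrite ptrmxE !mixmix mulrAC LR.
  rewrite -(pair_bigA _ (fun c e : midx n d => (\prod_(k < d) B k (mix kappa b a k) (c k)) * (e == mix kappa a b)%:R * M (ord_of c) (ord_of e))) /=.
  apply: eq_bigr => c _.
  rewrite (bigD1 (mix kappa a b)) //= eqxx mulr1 [X in _ + X]big1 ?addr0 //.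
  by move=> e /negbTE ->; rewrite mulr0 mul0r.
split=> // U.
rewrite E mxrankMfree; last first.
  rewrite row_free_unit; apply: kron_unit => k; case: (k \in kappa).
    by rewrite unitmx_tr.
  exact: unitmx1.
rewrite -mxrank_tr trmx_mul mxrankMfree ?mxrank_tr //.
rewrite row_free_unit unitmx_tr; apply: kron_unit => k; case: (k \in kappa) => //.
exact: unitmx1.
Qed.
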